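(* Let $G$ be a graph with maximum degree $\Delta\ge 1$ such that for every $i\in\{1,\ldots,\Delta\}$ there is a vertex of $G$ of degree $i$. Then $wr(G)\ge \log_3 \Delta$.
   Context: All graphs are finite, simple and undirected. For a set $E'$ of edges of a graph, the subgraph induced by $E'$ is the graph whose edge set is $E'$ and whose vertex set is the set of endpoints of edges in $E'$. A graph is weakly semiregular if there are two numbers $a,b$ (not necessarily distinct) such that the degree of every vertex is $a$ or $b$. The weakly semiregular number $wr(G)$ of a graph $G$ is the minimum number of subsets into which $E(G)$ can be partitioned so that the subgraph induced by each subset is weakly semiregular. *)

(* Defs.v *)
From mathcomp Require Import all_boot.
Set Implicit Arguments. Unset Strict Implicit. Unset Printing Implicit Defensive.

(* A finite simple graph: vertex type T : finType, adjacency e : rel T,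
   assumed symmetric and irreflexive (hypotheses of the theorem). *)

Definition deg (T : finType) (e : rel T) (x : T) : nat := #|[set y | e x y]|.

Definition maxdeg (T : finType) (e : rel T) : nat := \max_(x : T) deg e x.

(* Colour class i is the
   subset E_i = { {x,y} in E | c x y = i }; the classes partition E(G)
   (classes may be empty; empty classes are allowed, which does not change
   the minimum number of parts). *)
Definition edge_colouring (T : finType) (e : rel T) (k : nat)
  (c : T -> T -> 'I_k) : Prop :=
  forall x y, e x y -> c x y = c y x.

Definition cdeg (T : finType) (e : rel T) (k : nat) (c : T -> T -> 'I_k)
  (i : 'I_k) (x : T) : nat := #|[set y | e x y && (c x y == i)]|.

(* The subgraph induced by the edge set E_i has as vertices exactly the
   endpoints of edges of colour i, i.e. the x with cdeg > 0. It is weakly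
   semiregular iff there are a, b with every such vertex of degree a or b. *)
Definition weakly_semiregular_class (T : finType) (e : rel T) (k : nat)
  (c : T -> T -> 'I_k) (i : 'I_k) : Prop :=
  exists a b : nat, forall x : T, 0 < cdeg e c i x ->
    cdeg e c i x = a \/ cdeg e c i x = b.

Definition wr_partition (T : finType) (e : rel T) (k : nat) : Prop :=
  exists c : T -> T -> 'I_k, edge_colouring e c /\
    forall i : 'I_k, weakly_semiregular_class e c i.

(* Main.v *)
Require Import Defs.
From mathcomp Require Import all_boot.
From mathcomp Require Import zify.

Set Implicit Arguments. Unset Strict Implicit. Unset Printing Implicit Defensive.

Lemma deg_sum (T : finType) (e : rel T) (k : nat) (c : T -> T -> 'I_k) x :
  deg e x = \sum_(i < k) cdeg e c i x.
Proof.
rewrite /deg /cdeg -sum1_card.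
rewrite (partition_big (c x) predT) //=.
apply: eq_bigr => i _. idtac.
rewrite -sum1_card; apply: eq_bigl => y; by rewrite !inE.
Qed.

Section S.
Variables (T : finType) (e : rel T) (k : nat) (c : T -> T -> 'I_k).

Definition rv (i : 'I_k) : nat :=
  match [pick z | 0 < cdeg e c i z] with Some z => cdeg e c i z | None => 0 end.

Definition code (i : 'I_k) (x : T) : nat :=
  if cdeg e c i x == 0 then 0 else if cdeg e c i x == rv i then 1 else 2.

Definition fv (x : T) : {ffun 'I_k -> 'I_3} := [ffun i => inord (code i x)].

Lemma code_lt i x : code i x < 3.
Proof. rewrite /code; case: ifP => //; case: ifP => //. Qed.

Lemma code_inj i x y : weakly_semiregular_class e c i ->
  code i x = code i y -> cdeg e c i x = cdeg e c i y.
Proof.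
move=> [a [b Hab]].
rewrite /code /rv.
case: pickP => [z Hz|Hn].
- have Hz' := Hab z Hz.
  case: eqP => Hx; case: eqP => Hy //;
  (try by move=> _; lia);
  (try case: eqP => Hx2); (try case: eqP => Hy2) => //; try lia.
  move=> _.
  have Hx' : 0 < cdeg e c i x by lia.
  have Hy' : 0 < cdeg e c i y by lia.
  have := Hab x Hx'; have := Hab y Hy'. lia.
- case: eqP => Hx; case: eqP => Hy //; try lia;
  first [ have := Hn y; rewrite /= => /negbT; lia | have := Hn x; rewrite /= => /negbT; lia ].
Qed.

Lemma fv_deg x y : (forall i, weakly_semiregular_class e c i) ->
  fv x = fv y -> deg e x = deg e y.
Proof.
move=> Hw Hf; rewrite !(deg_sum _ c); apply: eq_bigr => i _.
apply: code_inj => //.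
have := congr1 (fun f : {ffun 'I_k -> 'I_3} => val (f i)) Hf.
by rewrite /fv !ffunE /= !inordK ?code_lt.
Qed.
End S.

Theorem mainTheorem4 (T : finType) (e : rel T)
  (e_sym : symmetric e) (e_irr : irreflexive e) :
  1 <= maxdeg e ->
  (forall i, 1 <= i <= maxdeg e -> exists x : T, deg e x = i) ->
  forall k : nat, wr_partition e k -> maxdeg e <= 3 ^ k.
Proof.
move=> _ Hex k [c [_ Hw]].
pose D := maxdeg e.
pose h (j : 'I_D) : {ffun 'I_k -> 'I_3} :=
  match [pick x | deg e x == j.+1] with Some x => fv e c x | None => [ffun=> ord0] end.
have Hp : forall j : 'I_D, exists x, [pick x | deg e x == j.+1] = Some x /\ deg e x = j.+1.
  move=> j; case: pickP => [x /eqP Hx|Hn]; first by exists x.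
  have [x Hx] : exists x : T, deg e x = j.+1.
    apply: Hex; have := ltn_ord j; rewrite /D; lia.
  by have := Hn x; rewrite Hx eqxx.
have hinj : injective h.
  move=> j1 j2; rewrite /h.
  have [x1 [-> H1]] := Hp j1; have [x2 [-> H2]] := Hp j2.
  move=> /(fv_deg Hw); rewrite H1 H2 => -[] /eqP.
  by move=> Heq; apply/val_inj; apply/eqP.
have := leq_card h hinj.
by rewrite card_ffun !card_ord.
Qed.
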